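(* Let $d_0,d_1$ be metrics on $\omega$. Then the completions of $\langle\omega,d_0\rangle$ and $\langle\omega,d_1\rangle$ are homeomorphic if and only if there are metrics $d'_0,d'_1$ on $\omega$ such that $d_e\preceq_{\mathrm{di}}d'_e$ for each $e\in\{0,1\}$ and there is a Cauchy-continuous bijection $g:\langle\omega,d'_0\rangle\to\langle\omega,d'_1\rangle$ whose inverse is Cauchy-continuous.
   Context: For metrics $d,d'$ on $\omega$, $d\preceq_{\mathrm{di}}d'$ means there is a dense isometry $\iota:\langle\omega,d\rangle\to\langle\omega,d'\rangle$, i.e. a distance-preserving map (not necessarily onto) with dense image. A function between metric spaces is Cauchy-continuous if it maps Cauchy sequences to Cauchy sequences. The completion of a metric space is a complete metric space together with a dense isometry from the space into it. *)

(* Defs.v *)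
From Stdlib Require Export Reals.
Open Scope R_scope.

Definition is_metric {X : Type} (d : X -> X -> R) : Prop :=
  (forall x y, 0 <= d x y) /\
  (forall x y, d x y = 0 <-> x = y) /\
  (forall x y, d x y = d y x) /\
  (forall x y z, d x z <= d x y + d y z).

Definition cauchy_seq {X : Type} (d : X -> X -> R) (u : nat -> X) : Prop :=
  forall eps, 0 < eps -> exists N, forall m n, (N <= m)%nat -> (N <= n)%nat ->
    d (u m) (u n) < eps.

Definition seq_converges {X : Type} (d : X -> X -> R) (u : nat -> X) (x : X) : Prop :=
  forall eps, 0 < eps -> exists N, forall n, (N <= n)%nat -> d (u n) x < eps.

Definition complete_metric {X : Type} (d : X -> X -> R) : Prop :=
  forall u, cauchy_seq d u -> exists x, seq_converges d u x.

Definition isometry {A B : Type} (dA : A -> A -> R) (dB : B -> B -> R) (f : A -> B) : Prop :=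
  forall x y, dB (f x) (f y) = dA x y.

Definition dense_image {A B : Type} (dB : B -> B -> R) (f : A -> B) : Prop :=
  forall y eps, 0 < eps -> exists x, dB (f x) y < eps.

Definition dense_isometry {A B : Type} (dA : A -> A -> R) (dB : B -> B -> R) (f : A -> B) : Prop :=
  isometry dA dB f /\ dense_image dB f.

Definition di_le (d d' : nat -> nat -> R) : Prop :=
  exists iota : nat -> nat, dense_isometry d d' iota.

Definition cauchy_continuous {A B : Type} (dA : A -> A -> R) (dB : B -> B -> R) (f : A -> B) : Prop :=
  forall u, cauchy_seq dA u -> cauchy_seq dB (fun n => f (u n)).

Definition is_completion {A X : Type} (dA : A -> A -> R) (dX : X -> X -> R) (iota : A -> X) : Prop :=
  is_metric dX /\ complete_metric dX /\ dense_isometry dA dX iota.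

Definition metric_continuous {A B : Type} (dA : A -> A -> R) (dB : B -> B -> R) (f : A -> B) : Prop :=
  forall x eps, 0 < eps -> exists delta, 0 < delta /\
    forall y, dA x y < delta -> dB (f x) (f y) < eps.

Definition homeomorphic {A B : Type} (dA : A -> A -> R) (dB : B -> B -> R) : Prop :=
  exists (f : A -> B) (g : B -> A),
    (forall x, g (f x) = x) /\ (forall y, f (g y) = y) /\
    metric_continuous dA dB f /\ metric_continuous dB dA g.

(* Main.v *)
Require Import Defs.
From Stdlib Require Import Reals Lra Lia Classical ClassicalEpsilon Arith.
Open Scope R_scope.

Definition rr (k : nat) : R := / (INR k + 1).

Lemma rr_pos k : 0 < rr k.
Proof. unfold rr. apply Rinv_0_lt_compat. pose proof (pos_INR k). lra. Qed.

Lemma rr_anti k l : (k <= l)%nat -> rr l <= rr k.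
Proof. intros H. unfold rr. apply Rinv_le_contravar.
  pose proof (pos_INR k); lra. apply le_INR in H. lra. Qed.

Lemma rr_small eps : 0 < eps -> exists K, rr K < eps.
Proof. intros He. destruct (INR_archimed eps 1 ltac:(lra)) as [n Hn].
  exists n. unfold rr. pose proof (pos_INR n).
  assert (Hx : / (INR n + 1) * (INR n + 1) = 1) by (field; lra).
  assert (0 < / (INR n + 1)) by (apply Rinv_0_lt_compat; lra).
  nra. Qed.

Section M.
Context {X : Type} (d : X -> X -> R) (Hd : is_metric d).
Lemma m_nonneg x y : 0 <= d x y. Proof. apply Hd. Qed.
Lemma m_refl x : d x x = 0. Proof. apply Hd; auto. Qed.
Lemma m_eq x y : d x y = 0 -> x = y. Proof. apply Hd. Qed.
Lemma m_sym x y : d x y = d y x. Proof. apply Hd. Qed.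
Lemma m_tri x y z : d x z <= d x y + d y z. Proof. apply Hd. Qed.
Lemma m_zero_eps x y : (forall eps, 0 < eps -> d x y < eps) -> x = y.
Proof. intros H. apply m_eq. pose proof (m_nonneg x y).
  destruct (Rle_lt_or_eq_dec _ _ H0) as [h|h]; [|auto].
  specialize (H _ h). lra. Qed.
Lemma conv_cauchy u x : seq_converges d u x -> cauchy_seq d u.
Proof. intros H eps He. destruct (H (eps/2) ltac:(lra)) as [N HN]. exists N.
  intros m n Hm Hn. specialize (HN m Hm) as A. specialize (HN n Hn) as B.
  pose proof (m_tri (u m) x (u n)). rewrite (m_sym x (u n)) in H0. lra. Qed.
End M.

Lemma le_eps a b : (forall eps, 0 < eps -> a <= b + eps) -> a <= b.
Proof. intros H. destruct (Rle_or_lt a b) as [h|h]; auto.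
  specialize (H ((a - b)/2) ltac:(lra)). lra. Qed.

Lemma m_tri3 {X : Type} (d : X -> X -> R) (Hd : is_metric d) a b c e :
  d a e <= d a b + d b c + d c e.
Proof. pose proof (m_tri d Hd a b e). pose proof (m_tri d Hd b c e). lra. Qed.

Lemma cont_conv {A B : Type} dA dB (f : A -> B) u x :
  is_metric dA -> is_metric dB -> metric_continuous dA dB f -> seq_converges dA u x ->
  seq_converges dB (fun n => f (u n)) (f x).
Proof. intros HA HB Hf Hu eps He. destruct (Hf x eps He) as [del [Hdel H]].
  destruct (Hu del Hdel) as [N HN]. exists N. intros n Hn.
  specialize (HN n Hn). rewrite (m_sym dA HA) in HN. specialize (H _ HN).
  rewrite (m_sym dB HB). exact H. Qed.

Lemma cont_cauchy {A B : Type} dA dB (f : A -> B) u :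
  is_metric dA -> is_metric dB -> complete_metric dA -> metric_continuous dA dB f ->
  cauchy_seq dA u -> cauchy_seq dB (fun n => f (u n)).
Proof. intros HA HB Hc Hf Hu. destruct (Hc u Hu) as [x Hx].
  apply (conv_cauchy dB HB _ (f x)). apply (cont_conv dA); auto. Qed.

Lemma iso_cc {A B : Type} dA dB (f : A -> B) : isometry dA dB f -> cauchy_continuous dA dB f.
Proof. intros H u Hu e He. destruct (Hu e He) as [N HN]. exists N. intros m n Hm Hn.
  rewrite H. auto. Qed.

Lemma cc_comp {A B C : Type} dA dB dC (f : A -> B) (g : B -> C) :
  cauchy_continuous dA dB f -> cauchy_continuous dB dC g -> cauchy_continuous dA dC (fun a => g (f a)).
Proof. intros Hf Hg u Hu. apply (Hg _ (Hf u Hu)). Qed.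

Lemma cont_comp {A B C : Type} dA dB dC (f : A -> B) (g : B -> C) :
  metric_continuous dA dB f -> metric_continuous dB dC g -> metric_continuous dA dC (fun a => g (f a)).
Proof. intros Hf Hg x e He. destruct (Hg (f x) e He) as [d1 [Hd1 H1]].
  destruct (Hf x d1 Hd1) as [d2 [Hd2 H2]]. exists d2. split; auto. Qed.

Lemma dense_id {A X : Type} dX (j : A -> X) (h : X -> X) :
  is_metric dX -> dense_image dX j -> metric_continuous dX dX h -> (forall a, h (j a) = j a) ->
  forall x, h x = x.
Proof. intros HX Hd Hh Hj x. apply (m_zero_eps dX HX). intros e He.
  destruct (Hh x (e/2) ltac:(lra)) as [del [Hdel H]].
  destruct (Hd x (Rmin del (e/2)) ltac:(apply Rmin_pos; lra)) as [a Ha].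
  pose proof (Rmin_l del (e/2)); pose proof (Rmin_r del (e/2)).
  assert (dX x (j a) < del) by (rewrite (m_sym dX HX); lra).
  specialize (H _ H2). rewrite Hj in H.
  pose proof (m_tri dX HX (h x) (j a) x). lra. Qed.

Lemma pull_metric {A X : Type} (dX : X -> X -> R) (f : A -> X) :
  is_metric dX -> (forall a b, f a = f b -> a = b) -> is_metric (fun a b => dX (f a) (f b)).
Proof. intros H Hi. repeat split.
  - intros; apply (m_nonneg dX H).
  - intro h. apply Hi, (m_eq dX H), h.
  - intros ->. apply (m_refl dX H).
  - intros; apply (m_sym dX H).
  - intros; apply (m_tri dX H). Qed.

Lemma even_dbl N : Nat.even (2*N) = true /\ Nat.even (S (2*N)) = false.
Proof. induction N. auto. replace (2 * S N)%nat with (S (S (2*N))) by lia.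
  rewrite !Nat.even_succ_succ. auto. Qed.

Lemma ext {A X Y : Type} dA dX dY (j : A -> X) (f : A -> Y) :
  is_metric dX -> is_metric dY -> complete_metric dY ->
  isometry dA dX j -> dense_image dX j -> cauchy_continuous dA dY f ->
  exists F : X -> Y, (forall a, F (j a) = f a) /\ metric_continuous dX dY F /\
     (isometry dA dY f -> isometry dX dY F).
Proof.
  intros HX HY Hcomp Hiso Hden Hf.
  assert (osc : forall x eps, 0 < eps -> exists delta, 0 < delta /\ forall a b,
     dX (j a) x < delta -> dX (j b) x < delta -> dY (f a) (f b) < eps).
  { intros x eps He. apply NNPP; intro Hn.
    assert (Hk : forall k, exists p : A * A, dX (j (fst p)) x < rr k /\
       dX (j (snd p)) x < rr k /\ ~ dY (f (fst p)) (f (snd p)) < eps).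
    { intro k. apply NNPP; intro H2. apply Hn. exists (rr k). split. apply rr_pos.
      intros a b Ha Hb. apply NNPP; intro H3. apply H2. exists (a,b). simpl. auto. }
    pose (p := fun k => proj1_sig (constructive_indefinite_description _ (Hk k))).
    assert (Hp : forall k, dX (j (fst (p k))) x < rr k /\ dX (j (snd (p k))) x < rr k /\
        ~ dY (f (fst (p k))) (f (snd (p k))) < eps)
      by (intro k; exact (proj2_sig (constructive_indefinite_description _ (Hk k)))).
    pose (c := fun n => if Nat.even n then fst (p n) else snd (p (pred n))).
    assert (Hc : forall n, dX (j (c n)) x < rr (pred n)).
    { intro n. unfold c. destruct (Nat.even n).
      - pose proof (proj1 (Hp n)). pose proof (rr_anti (pred n) n ltac:(lia)). lra.
      - apply (proj1 (proj2 (Hp (pred n)))). }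
    assert (Hcc : cauchy_seq dA c).
    { intros e He'. destruct (rr_small (e/2) ltac:(lra)) as [K HK]. exists (S K).
      intros m n Hm Hn'. rewrite <- Hiso.
      pose proof (Hc m). pose proof (Hc n).
      pose proof (rr_anti K (pred m) ltac:(lia)). pose proof (rr_anti K (pred n) ltac:(lia)).
      pose proof (m_tri dX HX (j (c m)) x (j (c n))). rewrite (m_sym dX HX x) in H3. lra. }
    destruct (Hf c Hcc eps He) as [N HN].
    specialize (HN (2*N)%nat (S (2*N)) ltac:(lia) ltac:(lia)). unfold c in HN.
    destruct (even_dbl N) as [E1 E2]. rewrite E1, E2 in HN. simpl pred in HN.
    apply (proj2 (proj2 (Hp (2*N)%nat))). exact HN. }
  assert (Hs : forall x k, exists a, dX (j a) x < rr k).
  { intros x k. destruct (Hden x (rr k) (rr_pos k)) as [a Ha]. eauto. }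
  pose (s := fun x k => proj1_sig (constructive_indefinite_description _ (Hs x k))).
  assert (Hsp : forall x k, dX (j (s x k)) x < rr k)
    by (intros x k; exact (proj2_sig (constructive_indefinite_description _ (Hs x k)))).
  assert (Hlim : forall x, exists L, seq_converges dY (fun k => f (s x k)) L).
  { intro x. apply Hcomp. apply Hf. intros e He. destruct (rr_small (e/2) ltac:(lra)) as [K HK].
    exists K. intros m n Hm Hn'. rewrite <- Hiso.
    pose proof (Hsp x m). pose proof (Hsp x n).
    pose proof (rr_anti K m Hm). pose proof (rr_anti K n Hn').
    pose proof (m_tri dX HX (j (s x m)) x (j (s x n))). rewrite (m_sym dX HX x) in H3. lra. }
  pose (F := fun x => proj1_sig (constructive_indefinite_description _ (Hlim x))).
  assert (HF : forall x, seq_converges dY (fun k => f (s x k)) (F x))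
    by (intros x; exact (proj2_sig (constructive_indefinite_description _ (Hlim x)))).
  assert (P1 : forall x e, 0 < e -> exists K, forall k, (K <= k)%nat ->
      dY (f (s x k)) (F x) < e /\ dX (j (s x k)) x < e).
  { intros x e He. destruct (HF x e He) as [N1 H1]. destruct (rr_small e He) as [K HK].
    exists (max N1 K). intros k Hk. split. apply H1; lia.
    pose proof (Hsp x k). pose proof (rr_anti K k ltac:(lia)). lra. }
  clearbody F s.
  exists F. split; [|split].
  - intro a. apply (m_zero_eps dY HY). intros e He.
    destruct (osc (j a) (e/2) ltac:(lra)) as [del [Hdel Ho]].
    destruct (P1 (j a) (Rmin del (e/2)) ltac:(apply Rmin_pos;lra)) as [K HK].
    destruct (HK K (le_n K)) as [H1 H2].
    pose proof (Rmin_l del (e/2)); pose proof (Rmin_r del (e/2)).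
    assert (dY (f (s (j a) K)) (f a) < e/2).
    { apply Ho. lra. rewrite (m_refl dX HX). lra. }
    pose proof (m_tri dY HY (F (j a)) (f (s (j a) K)) (f a)) as T.
    rewrite (m_sym dY HY (F (j a)) (f (s (j a) K))) in T. lra.
  - intros x e He. destruct (osc x (e/3) ltac:(lra)) as [del [Hdel Ho]].
    exists (del/2). split. lra. intros y Hy.
    assert (He1 : 0 < Rmin (e/3) (del/2)) by (apply Rmin_pos; lra).
    pose proof (Rmin_l (e/3) (del/2)); pose proof (Rmin_r (e/3) (del/2)).
    destruct (P1 x _ He1) as [K1 HK1]. destruct (P1 y _ He1) as [K2 HK2].
    destruct (HK1 (max K1 K2)) as [A1 A2]. lia. destruct (HK2 (max K1 K2)) as [B1 B2]. lia.
    assert (dY (f (s x (max K1 K2))) (f (s y (max K1 K2))) < e/3).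
    { apply Ho. lra. pose proof (m_tri dX HX (j (s y (max K1 K2))) y x) as T.
      rewrite (m_sym dX HX y x) in T. lra. }
    pose proof (m_tri3 dY HY (F x) (f (s x (max K1 K2))) (f (s y (max K1 K2))) (F y)) as T.
    rewrite (m_sym dY HY (F x) (f (s x (max K1 K2)))) in T. lra.
  - intros Hfi x y. 
    assert (G : forall e, 0 < e -> exists a b, dY (f a) (F x) < e /\ dX (j a) x < e /\
                 dY (f b) (F y) < e /\ dX (j b) y < e).
    { intros e He. destruct (P1 x e He) as [K1 HK1]. destruct (P1 y e He) as [K2 HK2].
      destruct (HK1 (max K1 K2)) as [A1 A2]. lia. destruct (HK2 (max K1 K2)) as [B1 B2]. lia.
      eauto 10. }
    apply Rle_antisym; apply le_eps; intros e He;
      destruct (G (e/4) ltac:(lra)) as [a [b [H1 [H2 [H3 H4]]]]];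
      pose proof (Hfi a b); pose proof (Hiso a b).
    + pose proof (m_tri3 dY HY (F x) (f a) (f b) (F y)) as T1.
      pose proof (m_tri3 dX HX (j a) x y (j b)) as T2.
      rewrite (m_sym dY HY (F x) (f a)) in T1. rewrite (m_sym dX HX y (j b)) in T2. lra.
    + pose proof (m_tri3 dY HY (f a) (F x) (F y) (f b)) as T1.
      pose proof (m_tri3 dX HX x (j a) (j b) y) as T2.
      rewrite (m_sym dY HY (F y) (f b)) in T1. rewrite (m_sym dX HX x (j a)) in T2. lra.
Qed.

Fixpoint sq (pb : nat -> bool) (n : nat) : nat :=
  match n with 0 => 0%nat | S n => let k := sq pb n in if pb (S k) then S k else S (S k) end.

Lemma enum (P : nat -> Prop) : (forall n, P (2*n)%nat) ->
  exists s : nat -> nat, (forall n, P (s n)) /\ (forall a b, s a = s b -> a = b) /\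
    (forall m, P m -> exists n, s n = m).
Proof.
  intros HP.
  pose (pb m := if excluded_middle_informative (P m) then true else false).
  assert (Hpb : forall m, pb m = true <-> P m).
  { intro m. unfold pb. destruct (excluded_middle_informative (P m)); split; auto; discriminate. }
  assert (Hlt : forall n, (sq pb n < sq pb (S n))%nat).
  { intro n. simpl. destruct (pb (S (sq pb n))); lia. }
  assert (Hmono : forall a b, (a < b)%nat -> (sq pb a < sq pb b)%nat).
  { intros a b H. induction H. apply Hlt. pose proof (Hlt m). lia. }
  exists (sq pb). split; [|split].
  - intro n. destruct n. simpl. apply (HP 0%nat). simpl.
    destruct (pb (S (sq pb n))) eqn:E. apply Hpb, E.
    destruct (Nat.Even_or_Odd (S (sq pb n))) as [[k Hk]|[k Hk]].
    + exfalso. rewrite Hk in E. pose proof (HP k). apply Hpb in H. congruence.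
    + rewrite Hk. replace (S (2*k+1)) with (2 * S k)%nat by lia. apply HP.
  - intros a b H. destruct (Nat.lt_trichotomy a b) as [h|[h|h]]; auto;
      apply Hmono in h; lia.
  - intros m Hm.
    assert (Hbr : forall m, exists n, (sq pb n <= m < sq pb (S n))%nat).
    { induction m0. exists 0%nat. pose proof (Hlt 0%nat). simpl sq at 1. lia.
      destruct IHm0 as [n Hn]. destruct (Nat.eq_dec (S m0) (sq pb (S n))).
      exists (S n). pose proof (Hlt (S n)). lia. exists n. lia. }
    destruct (Hbr m) as [n Hn]. exists n.
    destruct (Nat.eq_dec (sq pb n) m); auto. exfalso.
    simpl in Hn. destruct (pb (S (sq pb n))) eqn:E. lia.
    assert (m = S (sq pb n)) by lia. subst m. apply Hpb in Hm. congruence.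
Qed.

Theorem theorem4p7 (d0 d1 : nat -> nat -> R)
  (Hd0 : is_metric d0) (Hd1 : is_metric d1)
  (X0 : Type) (dX0 : X0 -> X0 -> R) (i0 : nat -> X0)
  (X1 : Type) (dX1 : X1 -> X1 -> R) (i1 : nat -> X1)
  (Hc0 : is_completion d0 dX0 i0) (Hc1 : is_completion d1 dX1 i1) :
  homeomorphic dX0 dX1 <->
  exists d0' d1' : nat -> nat -> R,
    is_metric d0' /\ is_metric d1' /\ di_le d0 d0' /\ di_le d1 d1' /\
    exists (g ginv : nat -> nat),
      (forall n, ginv (g n) = n) /\ (forall n, g (ginv n) = n) /\
      cauchy_continuous d0' d1' g /\ cauchy_continuous d1' d0' ginv.
Proof.
  destruct Hc0 as [HX0 [Hcp0 [Hi0 Hden0]]].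
  destruct Hc1 as [HX1 [Hcp1 [Hi1 Hden1]]].
  assert (Hi0inj : forall a b, i0 a = i0 b -> a = b).
  { intros a b E. apply (m_eq d0 Hd0). rewrite <- Hi0, E. apply (m_refl dX0 HX0). }
  assert (Hi1inj : forall a b, i1 a = i1 b -> a = b).
  { intros a b E. apply (m_eq d1 Hd1). rewrite <- Hi1, E. apply (m_refl dX1 HX1). }
  split.
  - intros [h [hi [Hhi [Hih [Hh Hhic]]]]].
    pose (phi m := if Nat.even m then i0 (Nat.div2 m) else hi (i1 (Nat.div2 m))).
    pose (P m := Nat.even m = true \/ ~ exists k, i0 k = hi (i1 (Nat.div2 m))).
    destruct (enum P) as [s [HsP [Hsi Hss]]].
    { intro n. left. apply even_dbl. }
    assert (Hphi : forall m1 m2, P m1 -> P m2 -> phi m1 = phi m2 -> m1 = m2).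
    { intros m1 m2 H1 H2 E.
      destruct (Nat.Even_or_Odd m1) as [[a Ha]|[a Ha]];
      destruct (Nat.Even_or_Odd m2) as [[b Hb]|[b Hb]];
      [ | replace m2 with (S (2*b)) in * by lia
        | replace m1 with (S (2*a)) in * by lia
        | replace m1 with (S (2*a)) in * by lia; replace m2 with (S (2*b)) in * by lia ];
      subst; unfold phi, P in *;
      rewrite ?(proj1 (even_dbl a)), ?(proj2 (even_dbl a)), ?(proj1 (even_dbl b)),
        ?(proj2 (even_dbl b)), ?Nat.div2_double, ?Nat.div2_succ_double in *.
      - assert (a = b) by auto. subst. reflexivity.
      - destruct H2 as [H2|H2]; [discriminate|]. exfalso. apply H2. eauto.
      - destruct H1 as [H1|H1]; [discriminate|]. exfalso. apply H1. eauto.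
      - assert (a = b); [|subst; reflexivity]. apply Hi1inj.
        rewrite <- (Hih (i1 a)), <- (Hih (i1 b)), E. reflexivity. }
    pose (psi k := phi (s k)).
    assert (Hpsi : forall a b, psi a = psi b -> a = b).
    { intros a b E. apply Hsi. apply Hphi; auto. }
    assert (Hhpsi : forall a b, h (psi a) = h (psi b) -> a = b).
    { intros a b E. apply Hpsi. rewrite <- (Hhi (psi a)), <- (Hhi (psi b)), E. reflexivity. }
    assert (E0 : forall n, exists k, psi k = i0 n).
    { intro n. destruct (Hss (2*n)%nat) as [k Hk]. left. apply even_dbl.
      exists k. unfold psi, phi. rewrite Hk, (proj1 (even_dbl n)), Nat.div2_double. reflexivity. }
    assert (E1 : forall n, exists k, psi k = hi (i1 n)).
    { intro n. destruct (classic (exists k, i0 k = hi (i1 n))) as [[k' Hk']|Hn].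
      - destruct (E0 k') as [k Hk]. exists k. congruence.
      - destruct (Hss (S (2*n))) as [k Hk].
        { right. rewrite Nat.div2_succ_double. exact Hn. }
        exists k. unfold psi, phi. rewrite Hk, (proj2 (even_dbl n)), Nat.div2_succ_double.
        reflexivity. }
    pose (io0 n := proj1_sig (constructive_indefinite_description _ (E0 n))).
    assert (Hio0 : forall n, psi (io0 n) = i0 n)
      by (intro n; exact (proj2_sig (constructive_indefinite_description _ (E0 n)))).
    pose (io1 n := proj1_sig (constructive_indefinite_description _ (E1 n))).
    assert (Hio1 : forall n, psi (io1 n) = hi (i1 n))
      by (intro n; exact (proj2_sig (constructive_indefinite_description _ (E1 n)))).
    clearbody io0 io1 psi.
    exists (fun a b => dX0 (psi a) (psi b)), (fun a b => dX1 (h (psi a)) (h (psi b))).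
    split; [apply pull_metric; auto|].
    split; [apply (pull_metric dX1 (fun k => h (psi k))); auto|].
    split; [|split; [|exists (fun n => n), (fun n => n); split; [auto|split; [auto|split]]]].
    + exists io0. split.
      * intros a b. rewrite !Hio0. apply Hi0.
      * intros y e He. destruct (Hden0 (psi y) e He) as [x Hx]. exists x. rewrite Hio0. exact Hx.
    + exists io1. split.
      * intros a b. rewrite !Hio1, !Hih. apply Hi1.
      * intros y e He. destruct (Hden1 (h (psi y)) e He) as [x Hx]. exists x.
        rewrite Hio1, Hih. exact Hx.
    + intros u Hu. exact (cont_cauchy dX0 dX1 h (fun n => psi (u n)) HX0 HX1 Hcp0 Hh Hu).
    + intros u Hu. pose proof (cont_cauchy dX1 dX0 hi (fun n => h (psi (u n))) HX1 HX0 Hcp1 Hhic Hu) as T.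
      intros e He. destruct (T e He) as [N HN]. exists N. intros m n Hm Hn.
      specialize (HN m n Hm Hn). simpl in HN. rewrite !Hhi in HN. exact HN.
  - intros [d0' [d1' [Hm0 [Hm1 [[io0 [Hio0 Hdi0]] [[io1 [Hio1 Hdi1]] [g [gi [Hg1 [Hg2 [Hg Hgi]]]]]]]]]]].
    destruct (ext d0 d0' dX0 io0 i0 Hm0 HX0 Hcp0 Hio0 Hdi0 (iso_cc _ _ _ Hi0))
      as [j0 [Hj0 [_ Hj0i]]].
    specialize (Hj0i Hi0).
    destruct (ext d1 d1' dX1 io1 i1 Hm1 HX1 Hcp1 Hio1 Hdi1 (iso_cc _ _ _ Hi1))
      as [j1 [Hj1 [_ Hj1i]]].
    specialize (Hj1i Hi1).
    assert (Dj0 : dense_image dX0 j0).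
    { intros y e He. destruct (Hden0 y e He) as [n Hn]. exists (io0 n). rewrite Hj0. exact Hn. }
    assert (Dj1 : dense_image dX1 j1).
    { intros y e He. destruct (Hden1 y e He) as [n Hn]. exists (io1 n). rewrite Hj1. exact Hn. }
    destruct (ext d0' dX0 dX1 j0 (fun n => j1 (g n)) HX0 HX1 Hcp1 Hj0i Dj0
       (cc_comp _ _ _ _ _ Hg (iso_cc _ _ _ Hj1i))) as [F [HF [HFc _]]].
    destruct (ext d1' dX1 dX0 j1 (fun n => j0 (gi n)) HX1 HX0 Hcp0 Hj1i Dj1
       (cc_comp _ _ _ _ _ Hgi (iso_cc _ _ _ Hj0i))) as [G [HG [HGc _]]].
    exists F, G. split; [|split; [|split; auto]].
    + apply (dense_id dX0 j0 (fun x => G (F x)) HX0 Dj0 (cont_comp _ _ _ _ _ HFc HGc)).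
      intro a. rewrite HF, HG, Hg1. reflexivity.
    + apply (dense_id dX1 j1 (fun x => F (G x)) HX1 Dj1 (cont_comp _ _ _ _ _ HGc HFc)).
      intro a. rewrite HG, HF, Hg2. reflexivity.
Qed.
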